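(* Let $G$ be a bounded metric operator on $\mathcal H$ (with $G^{-1}$ possibly unbounded) and $S$ a closed densely defined operator in $\mathcal H$. Then for every $\zeta\in D(S^* )\cap D(G^{-1/2})$ such that $S^*\zeta\in D(G^{-1/2})$, there exists $\eta\in D(S^\#)$ such that $\widetilde G\eta=\zeta$ and $\widetilde G S^\#\eta=S^*\widetilde G\eta\,(=S^*\zeta)$.
   Context: A metric operator on a Hilbert space $\mathcal H$ is a self-adjoint operator $G$ with $\langle G\xi,\xi\rangle>0$ for all nonzero $\xi\in D(G)$. For bounded $G$, $\mathcal H(G)$ is the completion of $\mathcal H$ in the norm $\|\xi\|_G=\|G^{1/2}\xi\|$ with inner product $\langle\xi,\eta\rangle_G=\langle G\xi,\eta\rangle$, and $\widetilde G:\mathcal H(G)\to\mathcal H$ is the continuous extension of $G$. $S^\#$ is the adjoint of $S$ regarded as a densely defined operator in $\mathcal H(G)$ with domain $D(S)$; $S^*$ is the adjoint in $\mathcal H$. *)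

(* Defs.v *)
From mathcomp Require Import all_boot all_order all_algebra.
From mathcomp Require Import reals complex.
Set Implicit Arguments. Unset Strict Implicit. Unset Printing Implicit Defensive.
Import Order.TTheory GRing.Theory Num.Theory.
Local Open Scope ring_scope.

(** A Hilbert space over the scalar field [C] is an [lmodType C] together with
    an inner product [ip], linear in the FIRST argument and conjugate-linear
    in the second (the convention ⟨Gξ,ξ⟩ of the paper), complete for the norm
    [ipnorm x = sqrt (ip x x)]. *)

Section Hilbert.
Variables (C : numClosedFieldType) (V : lmodType C) (ip : V -> V -> C).

Definition inner_product : Prop :=
  [/\ forall (a : C) (x y z : V), ip (a *: x + y) z = a * ip x z + ip y z,
      forall x y : V, ip y x = Num.conj (ip x y),
      forall x : V, 0 <= ip x x &
      forall x : V, ip x x = 0 -> x = 0].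

Definition ipnorm (x : V) : C := sqrtC (ip x x).

Definition cauchy_seq (u : nat -> V) : Prop :=
  forall e : C, 0 < e -> exists N : nat, forall m n : nat,
    (N <= m)%N -> (N <= n)%N -> ipnorm (u m - u n) < e.

Definition seq_conv (u : nat -> V) (l : V) : Prop :=
  forall e : C, 0 < e -> exists N : nat, forall n : nat,
    (N <= n)%N -> ipnorm (u n - l) < e.

Definition hilbert : Prop :=
  inner_product /\ forall u, cauchy_seq u -> exists l, seq_conv u l.

Definition subspace (D : V -> Prop) : Prop :=
  D 0 /\ forall (a : C) x y, D x -> D y -> D (a *: x + y).

Definition dense (D : V -> Prop) : Prop :=
  forall (x : V) (e : C), 0 < e -> exists y, D y /\ ipnorm (x - y) < e.

(** ** (Possibly unbounded) operators in V: a domain [D] and an action [S]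
    (the values of [S] outside [D] are irrelevant). *)
Definition densely_defined (D : V -> Prop) (S : V -> V) : Prop :=
  [/\ subspace D, dense D &
      forall (a : C) x y, D x -> D y -> S (a *: x + y) = a *: S x + S y].

Definition closed_op (D : V -> Prop) (S : V -> V) : Prop :=
  forall (u : nat -> V) (x y : V), (forall n, D (u n)) ->
    seq_conv u x -> seq_conv (fun n => S (u n)) y -> D x /\ S x = y.

(** [adjoint D S y z] : y ∈ D(S^* ) and S^* y = z, where S^* is the Hilbert
    adjoint of (D,S) w.r.t. [ip]  (z is unique when D is dense). *)
Definition adjoint (D : V -> Prop) (S : V -> V) (y z : V) : Prop :=
  forall x, D x -> ip (S x) y = ip x z.

Definition linear_op (T : V -> V) : Prop :=
  forall (a : C) x y, T (a *: x + y) = a *: T x + T y.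

Definition bounded_op (T : V -> V) : Prop :=
  linear_op T /\ exists M : C, 0 <= M /\ forall x, ipnorm (T x) <= M * ipnorm x.

Definition self_adjoint_bounded (T : V -> V) : Prop :=
  bounded_op T /\ forall x y, ip (T x) y = ip x (T y).

Definition bounded_metric_operator (G : V -> V) : Prop :=
  self_adjoint_bounded G /\ forall x, x != 0 -> 0 < ip (G x) x.

(** [Gh] is THE positive square root G^{1/2} of the positive bounded
    operator G (it is unique). *)
Definition positive_sqrt (G Gh : V -> V) : Prop :=
  [/\ self_adjoint_bounded Gh, forall x, 0 <= ip (Gh x) x &
      forall x, Gh (Gh x) = G x].

(** domain of G^{-1/2} = (G^{1/2})^{-1}: the range of G^{1/2} *)
Definition dom_inv_sqrt (Gh : V -> V) (x : V) : Prop := exists y, Gh y = x.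

End Hilbert.

Section TwoSpaces.
Variables (C : numClosedFieldType) (V W : lmodType C)
  (ipV : V -> V -> C) (ipW : W -> W -> C).

Definition linear_map (f : V -> W) : Prop :=
  forall (a : C) x y, f (a *: x + y) = a *: f x + f y.

Definition bounded_map (f : V -> W) : Prop :=
  linear_map f /\ exists M : C, 0 <= M /\
    forall x, ipnorm ipW (f x) <= M * ipnorm ipV x.

End TwoSpaces.

(** ** The space H(G) and G~.
    [completion ip G ipK iota] : (K, ipK) is a Hilbert space and iota : H -> K
    is a linear map with ⟨iota x, iota y⟩_K = ⟨G x, y⟩ = ⟨x,y⟩_G and dense
    range; i.e. (K, iota) is (a model of) the completion H(G) of (H, ⟨.,.⟩_G).
    The completion is unique up to unitary equivalence. *)
Definition completion (C : numClosedFieldType) (H K : lmodType C)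
  (ip : H -> H -> C) (G : H -> H) (ipK : K -> K -> C) (iota : H -> K) : Prop :=
  [/\ hilbert ipK, linear_map iota,
      forall x y, ipK (iota x) (iota y) = ip (G x) y &
      dense ipK (fun k => exists x, iota x = k)].

Definition continuous_extension (C : numClosedFieldType) (H K : lmodType C)
  (ip : H -> H -> C) (G : H -> H) (ipK : K -> K -> C) (iota : H -> K)
  (Gt : K -> H) : Prop :=
  bounded_map ipK ip Gt /\ forall x, Gt (iota x) = G x.

(** [sharp ipK iota D S eta w] : eta ∈ D(S^#) and S^# eta = w, where S^# is
    the adjoint in H(G) of the operator S regarded in H(G), i.e. the operator
    with domain iota(D(S)) acting by iota x |-> iota (S x). *)
Definition sharp (C : numClosedFieldType) (H K : lmodType C)
  (ipK : K -> K -> C) (iota : H -> K) (D : H -> Prop) (S : H -> H)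
  (eta w : K) : Prop :=
  forall x, D x -> ipK (iota (S x)) eta = ipK (iota x) w.

(* Main.v *)
Require Import Defs.
From mathcomp Require Import all_boot all_order all_algebra.
From mathcomp Require Import reals complex.
From mathcomp Require Import classical_sets.
From mathcomp Require Import ring lra.
Import Order.TTheory GRing.Theory Num.Theory.
Local Open Scope ring_scope.
Set Implicit Arguments. Unset Strict Implicit. Unset Printing Implicit Defensive.

Section IP.
Variables (C : numClosedFieldType) (V : lmodType C) (ip : V -> V -> C).
Hypothesis Hip : inner_product ip.

Lemma ipAl a x y z : ip (a *: x + y) z = a * ip x z + ip y z.
Proof. by case: Hip. Qed.
Lemma ipC x y : ip y x = (ip x y)^*.
Proof. by case: Hip. Qed.
Lemma ipxx_ge0 x : 0 <= ip x x.
Proof. by case: Hip. Qed.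
Lemma ipxx0 x : ip x x = 0 -> x = 0.
Proof. by case: Hip => _ _ _; apply. Qed.

Lemma ip0l z : ip 0 z = 0.
Proof.
pose proof (ipAl 1 0 0 z) as H. rewrite scale1r addr0 mul1r in H.
have := congr1 (fun w => w - ip 0 z) H; by rewrite subrr addrK.
Qed.
Lemma ipDl x y z : ip (x + y) z = ip x z + ip y z.
Proof. by rewrite -[x]scale1r ipAl mul1r scale1r. Qed.
Lemma ipZl a x z : ip (a *: x) z = a * ip x z.
Proof. by rewrite -[a *: x]addr0 ipAl ip0l addr0. Qed.
Lemma ipNl x z : ip (- x) z = - ip x z.
Proof. by rewrite -scaleN1r ipZl mulN1r. Qed.
Lemma ipBl x y z : ip (x - y) z = ip x z - ip y z.
Proof. by rewrite ipDl ipNl. Qed.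
Lemma ip0r z : ip z 0 = 0.
Proof. by rewrite ipC ip0l conjC0. Qed.
Lemma ipDr x y z : ip z (x + y) = ip z x + ip z y.
Proof. by rewrite ipC ipDl rmorphD /= -!ipC. Qed.
Lemma ipZr a x z : ip z (a *: x) = a^* * ip z x.
Proof. by rewrite ipC ipZl rmorphM /= -ipC. Qed.
Lemma ipNr x z : ip z (- x) = - ip z x.
Proof. by rewrite ipC ipNl rmorphN /= -ipC. Qed.
Lemma ipBr x y z : ip z (x - y) = ip z x - ip z y.
Proof. by rewrite ipDr ipNr. Qed.
Lemma ipxx_real x : ip x x \is Num.real.
Proof. exact: ger0_real (ipxx_ge0 x). Qed.
Lemma ipxx_conj x : (ip x x)^* = ip x x.
Proof. by rewrite conj_Creal ?ipxx_real. Qed.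

Lemma ipnorm_ge0 x : 0 <= ipnorm ip x.
Proof. by rewrite sqrtC_ge0 ipxx_ge0. Qed.
Lemma ipnorm_sq x : ipnorm ip x ^+ 2 = ip x x.
Proof. by rewrite sqrtCK. Qed.
Lemma ipnormN x : ipnorm ip (- x) = ipnorm ip x.
Proof. by rewrite /ipnorm ipNl ipNr opprK. Qed.
Lemma ipnormB x y : ipnorm ip (x - y) = ipnorm ip (y - x).
Proof. by rewrite -ipnormN opprB. Qed.
Lemma ipnorm0 : ipnorm ip 0 = 0.
Proof. by rewrite /ipnorm ip0l sqrtC0. Qed.
Lemma ipnorm_gt0 x : x != 0 -> 0 < ipnorm ip x.
Proof.
move=> nx; rewrite sqrtC_gt0 lt_def ipxx_ge0 andbT.
by apply/eqP => /ipxx0 /eqP; rewrite (negPf nx).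
Qed.
Lemma ipnormZ a x : ipnorm ip (a *: x) = `|a| * ipnorm ip x.
Proof.
rewrite /ipnorm ipZl ipZr mulrA -normCK sqrtCM ?nnegrE ?exprn_ge0 ?ipxx_ge0 //.
by rewrite sqrCK.
Qed.

Lemma CS x y : `|ip x y| <= ipnorm ip x * ipnorm ip y.
Proof.
have [->|ny] := eqVneq y 0.
  by rewrite ip0r normr0 ipnorm0 mulr0.
set v := ip y y; set c := ip x y.
have vgt0 : 0 < v.
  rewrite lt_def ipxx_ge0 andbT; apply/eqP => /ipxx0 /eqP; by rewrite (negPf ny).
have vr : v^* = v by rewrite ipxx_conj.
have v0 : v != 0 by rewrite gt_eqF.
set a := c / v.
have := ipxx_ge0 (x - a *: y).
rewrite !(ipBl, ipBr, ipZl, ipZr) -/v -/c (ipC x y) -/c.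
have -> : a^* = c^* / v by rewrite /a rmorphM /= fmorphV /= vr.
have -> : ip x x - c^* / v * c - (a * c^* - a * (c^* / v * v)) =
          (ip x x * v - c * c^*) / v by rewrite /a; field.
rewrite pmulr_lge0 ?invr_gt0 // subr_ge0 -normCK => H.
rewrite -(ler_pXn2r (isT : (0 < 2)%N)) ?nnegrE ?mulr_ge0 ?ipnorm_ge0 //.
by rewrite exprMn !ipnorm_sq.
Qed.

Lemma ipnormD x y : ipnorm ip (x + y) <= ipnorm ip x + ipnorm ip y.
Proof.
rewrite -(ler_pXn2r (isT : (0 < 2)%N)) ?nnegrE ?addr_ge0 ?ipnorm_ge0 //.
rewrite ipnorm_sq sqrrD !ipnorm_sq !(ipDl, ipDr) (ipC x y).
have : ip x y + (ip x y)^* <= 2 * (ipnorm ip x * ipnorm ip y).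
  have := CS x y; set c := ip x y => H.
  have H3 : c + c^* <= 2 * `|c|.
    have -> : c + c^* = 2 * 'Re c by rewrite ReE mulrC divfK // pnatr_eq0.
    by rewrite ler_pM2l ?ltr0n //; case: (leif_Re_Creal c).
  apply: (le_trans H3); rewrite ler_pM2l ?ltr0n //.
have -> : ip x x + ip x y + ((ip x y)^* + ip y y) = ip x x + (ip x y + (ip x y)^*) + ip y y by rewrite !addrA.
move=> H; by rewrite -mulr_natl lerD2r lerD2l.
Qed.
End IP.

Lemma small_mul (C : numFieldType) (a x e : C) :
  0 <= a -> 0 <= x -> 0 < e -> x < e / (a + 1) -> a * x < e.
Proof.
move=> a0 x0 e0 lt.
have a1 : 0 < a + 1 by rewrite ltr_wpDl.
apply: (le_lt_trans (y := (a + 1) * x)).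
  by rewrite ler_wpM2r // lerDl.
by rewrite -(ltr_pM2l a1) [(a + 1) * (e / _)]mulrC divfK ?gt_eqF // in lt.
Qed.

Section Conv.
Variables (C : numClosedFieldType) (V W : lmodType C)
  (ipV : V -> V -> C) (ipW : W -> W -> C).
Hypotheses (HV : inner_product ipV) (HW : inner_product ipW).

Lemma conv_unique u l1 l2 : seq_conv ipV u l1 -> seq_conv ipV u l2 -> l1 = l2.
Proof.
move=> c1 c2; apply/eqP; apply/negPn/negP => ne.
have e0 : 0 < ipnorm ipV (l1 - l2) by apply: ipnorm_gt0; rewrite // subr_eq0.
have e2 : 0 < ipnorm ipV (l1 - l2) / 2 by rewrite divr_gt0.
have [N1 H1] := c1 _ e2; have [N2 H2] := c2 _ e2.
have := H1 (maxn N1 N2) (leq_maxl _ _); have := H2 (maxn N1 N2) (leq_maxr _ _).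
set w := u _ => h2 h1.
have : ipnorm ipV (l1 - l2) < ipnorm ipV (l1 - l2).
  apply: (le_lt_trans (y := ipnorm ipV (w - l1) + ipnorm ipV (w - l2))).
    by rewrite (ipnormB HV w l1); have := ipnormD HV (l1 - w) (w - l2); rewrite addrA subrK.
  by rewrite [X in _ < X]splitr; apply: ltrD.
by rewrite ltxx.
Qed.

Lemma conv_shift u l : seq_conv ipV u l -> seq_conv ipV (fun n => u n.+1) l.
Proof.
move=> c e e0; have [N H] := c e e0; exists N => n Nn; apply: H.
exact: leq_trans Nn (leqnSn _).
Qed.

Lemma linmap0 (f : V -> W) : linear_map f -> f 0 = 0.
Proof.
move=> lf; have := lf 1 0 0; rewrite scale1r addr0 scale1r => H.
by have := congr1 (fun w => w - f 0) H; rewrite subrr addrK.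
Qed.
Lemma linmapB (f : V -> W) x y : linear_map f -> f (x - y) = f x - f y.
Proof.
move=> lf; have := lf (-1) y x; rewrite !scaleN1r => H.
by rewrite addrC H addrC.
Qed.

Lemma conv_map (f : V -> W) u l : bounded_map ipV ipW f ->
  seq_conv ipV u l -> seq_conv ipW (fun n => f (u n)) (f l).
Proof.
move=> [lf [M [M0 HM]]] c e e0.
have e1 : 0 < e / (M + 1) by rewrite divr_gt0 // ltr_wpDl.
have [N H] := c _ e1; exists N => n Nn.
rewrite -linmapB //; apply: le_lt_trans (HM _) _.
by apply: small_mul => //; [apply: ipnorm_ge0 | apply: H].
Qed.

Lemma abs_small (d : C) : (forall e, 0 < e -> `|d| < e) -> d = 0.
Proof.
move=> H; apply/eqP; apply/negPn/negP => nd.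
have dp : 0 < `|d| by rewrite normr_gt0.
by have := H _ dp; rewrite ltxx.
Qed.

Lemma conv_ip u l v m y z : seq_conv ipV u l -> seq_conv ipW v m ->
  (forall n, ipV y (u n) = ipW z (v n)) -> ipV y l = ipW z m.
Proof.
move=> cu cv E; apply/eqP; rewrite -subr_eq0; apply/eqP; apply: abs_small => e e0.
have e2 : 0 < e / 2 by rewrite divr_gt0.
have e3 : 0 < e / 2 / (ipnorm ipV y + 1) by rewrite divr_gt0 // ltr_wpDl // ipnorm_ge0.
have e4 : 0 < e / 2 / (ipnorm ipW z + 1) by rewrite divr_gt0 // ltr_wpDl // ipnorm_ge0.
have [N1 H1] := cu _ e3; have [N2 H2] := cv _ e4.
set n := maxn N1 N2.
have -> : ipV y l - ipW z m = - ipV y (u n - l) + ipW z (v n - m).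
  by rewrite (ipBr HV) (ipBr HW) -E opprB addrA subrK.
apply: le_lt_trans (ler_normD _ _) _; rewrite normrN [X in _ < X]splitr.
apply: ltrD; apply: le_lt_trans (CS _ _ _) _ => //.
  apply: small_mul; rewrite ?ipnorm_ge0 //.
  by apply: H1; apply: leq_maxl.
apply: small_mul; rewrite ?ipnorm_ge0 //.
by apply: H2; apply: leq_maxr.
Qed.
End Conv.

Lemma decr_cauchy (R : realType) (f : nat -> R[i]) :
  (forall n, 0 <= f n) ->
  forall e, 0 < e -> exists N, forall n, (N <= n)%N -> f N - f n < e.
Proof.
move=> f0 e e0.
pose d n := complex.Re (f n).
have fd n : f n = (d n)%:C%C by rewrite /d RRe_real // ger0_real.
have d0 n : 0 <= d n by rewrite -lecR -fd.
have er : e = (complex.Re e)%:C%C by rewrite RRe_real // gtr0_real.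
have ep : 0 < complex.Re e by rewrite -ltcR -er.
pose E := fun x : R => exists n, x = - d n.
have hs : has_sup E.
  split; first by exists (- d 0%N), 0%N.
  exists 0 => y [n ->]; by rewrite oppr_le0.
have [x [N ->] Hx] := sup_adherent ep hs.
exists N => n _.
have := sup_upper_bound hs (ex_intro _ n erefl : E (- d n)) => H.
rewrite er !fd -rmorphB /= ltcR.
lra.
Qed.

Lemma conv_cauchy (C : numClosedFieldType) (V : lmodType C) (ip : V -> V -> C)
  (Hip : inner_product ip) u l : seq_conv ip u l -> cauchy_seq ip u.
Proof.
move=> c e e0; have e2 : 0 < e / 2 by rewrite divr_gt0.
have [N H] := c _ e2; exists N => m n Nm Nn.
apply: (le_lt_trans (y := ipnorm ip (u m - l) + ipnorm ip (u n - l))).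
  rewrite (ipnormB Hip (u n)); have := ipnormD Hip (u m - l) (l - u n).
  by rewrite addrA subrK.
by rewrite [X in _ < X]splitr; apply: ltrD; apply: H.
Qed.

Lemma linmapD (C : numClosedFieldType) (V W : lmodType C) (f : V -> W) x y :
  linear_map f -> f (x + y) = f x + f y.
Proof. by move=> lf; rewrite -[x]scale1r (lf 1 x y) !scale1r. Qed.
Lemma linmapZ (C : numClosedFieldType) (V W : lmodType C) (f : V -> W) a x :
  linear_map f -> f (a *: x) = a *: f x.
Proof. by move=> lf; rewrite -[a *: x]addr0 (lf a x 0) (linmap0 lf) addr0. Qed.

Lemma even_odd k : exists j, k = (j + j)%N \/ k = (j + j).+1.
Proof.
elim: k => [|k [j [->|->]]]; first by exists 0%N; left.
  by exists j; right.
by exists j.+1; left; rewrite addnS addSn.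
Qed.

Section Iter.
Variables (R : realType) (H : lmodType R[i]) (ip : H -> H -> R[i]).
Hypothesis Hip : inner_product ip.
Hypothesis Hcomp : forall u, cauchy_seq ip u -> exists l, seq_conv ip u l.
Variables (G Gh : H -> H) (MG Mh : R[i]).
Hypotheses (LG : linear_map G) (LGh : linear_map Gh).
Hypotheses (MG0 : 0 <= MG) (Mh0 : 0 <= Mh).
Hypothesis BG : forall x, ipnorm ip (G x) <= MG * ipnorm ip x.
Hypothesis BGh : forall x, ipnorm ip (Gh x) <= Mh * ipnorm ip x.
Hypothesis SG : forall x y, ip (G x) y = ip x (G y).
Hypothesis SGh : forall x y, ip (Gh x) y = ip x (Gh y).
Hypothesis GhGh : forall x, Gh (Gh x) = G x.
Hypothesis Gpos : forall x, x != 0 -> 0 < ip (G x) x.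

Let t : R[i] := (Mh ^+ 2 + 1)^-1.
Let t0 : 0 < t.
Proof. by rewrite invr_gt0 ltr_wpDl // exprn_ge0. Qed.
Let tr : t^* = t.
Proof. by rewrite conj_Creal // gtr0_real. Qed.
Let tM : t * Mh ^+ 2 <= 1.
Proof.
rewrite /t mulrC -[X in _ <= X](@divff _ (Mh ^+ 2 + 1)) ?gt_eqF ?ltr_wpDl ?exprn_ge0 //.
by rewrite ler_wpM2r ?invr_ge0 ?addr_ge0 ?exprn_ge0 // lerDl.
Qed.

Let T y := y - t *: G y.

Let LT : linear_map T.
Proof.
move=> a x y; rewrite /T (linmapD _ _ LG) (linmapZ _ _ LG) scalerDr scalerBr.
by rewrite scalerA mulrC -scalerA; rewrite opprD addrACA.
Qed.

Let ST x y : ip (T x) y = ip x (T y).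
Proof. by rewrite /T (ipBl Hip) (ipBr Hip) (ipZl Hip) (ipZr Hip) tr SG. Qed.

Let GhT y : Gh (T y) = T (Gh y).
Proof. by rewrite /T (linmapB _ _ LGh) (linmapZ _ _ LGh) -GhGh -GhGh GhGh. Qed.

Let ipG y : ip (G y) y = ip (Gh y) (Gh y).
Proof. by rewrite -GhGh SGh. Qed.

Let tq y : t * ip (Gh y) (Gh y) <= ip y y.
Proof.
have h : ip (Gh y) (Gh y) <= Mh ^+ 2 * ip y y.
  rewrite -!(ipnorm_sq ip) -exprMn ler_pXn2r ?nnegrE ?mulr_ge0 ?ipnorm_ge0 //.
apply: (le_trans (y := t * (Mh ^+ 2 * ip y y))).
  by rewrite ler_wpM2l // ltW.
by rewrite mulrA ler_piMl ?(ipxx_ge0 Hip).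
Qed.

Let T7a y : 0 <= ip (T y) y.
Proof. by rewrite /T (ipBl Hip) (ipZl Hip) ipG subr_ge0. Qed.
Let T7b y : ip (T y) y <= ip y y.
Proof.
rewrite /T (ipBl Hip) (ipZl Hip) ipG lerBlDr lerDl.
by apply: mulr_ge0; [apply: ltW | apply: (ipxx_ge0 Hip)].
Qed.

Variable a : H.
Let r n := iter n T a.
Let c k := ip (r k) a.

Let C1 m n : ip (r n) (r m) = c (n + m).
Proof.
elim: m n => [|m IH] n; first by rewrite addn0.
by rewrite /r iterS -ST -iterS -/(r _) IH addSnnS.
Qed.

Let C23 k : c k.+1 <= c k /\ 0 <= c k.
Proof.
have [j [->|->]] := even_odd k.
  rewrite -addSn -!C1 /r iterS; split; first exact: T7b.
  exact: (ipxx_ge0 Hip).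
rewrite -addnS -addSn -!C1 /r !iterS; set y := iter j T a.
rewrite -[ip y (T y)]ST; split; last exact: T7a.
rewrite -subr_ge0 -(ipBr Hip).
have -> : y - T y = t *: G y by rewrite /T opprB addrC subrK.
rewrite (ipZr Hip) tr -GhGh -SGh GhT.
by apply: mulr_ge0; [apply: ltW | apply: T7a].
Qed.

Let C4 N k : (N <= k)%N -> c k <= c N.
Proof.
move=> /subnKC <-; elim: (k - N)%N => [|i IH]; first by rewrite addn0.
by rewrite addnS; apply: le_trans IH; case: (C23 (N + i)).
Qed.

Let rcauchy : cauchy_seq ip r.
Proof.
move=> e e0.
have e2 : 0 < e ^+ 2 / 2 by rewrite divr_gt0 ?exprn_gt0.
have [N HN] := decr_cauchy (fun k => proj2 (C23 k)) e2.
exists N => n m Nn Nm.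
rewrite -(ltr_pXn2r (isT : (0 < 2)%N)) ?nnegrE ?(ipnorm_ge0 Hip) ?ltW //.
rewrite ipnorm_sq !(ipBl Hip, ipBr Hip) !C1 (addnC m n).
have -> : c (n + n)%N - c (n + m)%N - (c (n + m)%N - c (m + m)%N) =
  (c (n + n)%N - c (n + m)%N) + (c (m + m)%N - c (n + m)%N).
  by rewrite opprB addrA [_ - _ + c _]addrC addrA.
rewrite [X in _ < X]splitr; apply: ltrD.
  apply: le_lt_trans (HN (n + m)%N _); last exact: leq_trans Nn (leq_addr _ _).
  by rewrite lerD2r; apply: C4; apply: leq_trans Nn (leq_addr _ _).
apply: le_lt_trans (HN (n + m)%N _); last exact: leq_trans Nn (leq_addr _ _).
by rewrite lerD2r; apply: C4; apply: leq_trans Nm (leq_addr _ _).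
Qed.

Let BT : bounded_map ip ip T.
Proof.
split; first exact: LT.
exists (1 + t * MG); split; first by rewrite addr_ge0 // mulr_ge0 // ltW.
move=> y; rewrite /T; apply: le_trans (ipnormD Hip _ _) _.
rewrite (ipnormN Hip) (ipnormZ Hip) gtr0_norm // mulrDl mul1r lerD2l -mulrA.
by apply: ler_wpM2l; [apply: ltW | apply: BG].
Qed.

Let r0 : seq_conv ip r 0.
Proof.
have [l cl] := Hcomp rcauchy.
have Tl : T l = l.
  apply: (conv_unique Hip (u := fun n => T (r n))); first exact: conv_map BT cl.
  exact: conv_shift cl.
suff E0 : l = 0 by rewrite -E0.
apply/eqP; apply/negPn/negP => nl.
have := Gpos nl.
have := congr1 (fun z => l - z) Tl; rewrite /= /T opprB addrC subrK subrr.
move/eqP; rewrite scaler_eq0 gt_eqF //= => /eqP ->.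
by rewrite (ip0l Hip) ltxx.
Qed.

Lemma approx_iter : exists x : nat -> H, seq_conv ip (fun n => Gh (x n)) a.
Proof.
pose x := fix x n := if n is n'.+1 then x n' + t *: Gh (r n') else 0.
have E n : a - Gh (x n) = r n.
  elim: n => [|n IH] /=; first by rewrite (linmap0 LGh) subr0.
  rewrite (linmapD _ _ LGh) (linmapZ _ _ LGh) GhGh opprD addrA IH.
  by [].
exists x => e e0; have [N HN] := r0 e0; exists N => n Nn.
have := HN n Nn; rewrite -E subr0 -(ipnormN Hip) opprB.
by [].
Qed.
End Iter.

Lemma conv_ext (C : numClosedFieldType) (V : lmodType C) (ip : V -> V -> C) u v l :
  (forall n, u n = v n) -> seq_conv ip u l -> seq_conv ip v l.
Proof.
by move=> E c e e0; have [N HN] := c e e0; exists N => n Nn; rewrite -E; apply: HN.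
Qed.

Unset Implicit Arguments.

Theorem mainTheorem6
  (R : realType) (H K : lmodType R[i])
  (ip : H -> H -> R[i]) (ipK : K -> K -> R[i])
  (G Gh : H -> H) (iota : H -> K) (Gt : K -> H)
  (D : H -> Prop) (S : H -> H) :
  hilbert ip ->
  bounded_metric_operator ip G ->
  positive_sqrt ip G Gh ->
  completion ip G ipK iota ->
  continuous_extension ip G ipK iota Gt ->
  densely_defined ip D S ->
  closed_op ip D S ->
  forall zeta Sstar_zeta : H,
    adjoint ip D S zeta Sstar_zeta ->
    dom_inv_sqrt Gh zeta ->
    dom_inv_sqrt Gh Sstar_zeta ->
  exists eta w : K,
    sharp ipK iota D S eta w /\
    Gt eta = zeta /\
    adjoint ip D S (Gt eta) (Gt w) /\
    Gt w = Sstar_zeta.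
Proof.
move=> [Hip Hcomp] [[[LG [MG [MG0 BG]]] SG] Gpos] [[[LGh [Mh [Mh0 BGh]]] SGh] _ GhGh].
move=> [[HipK HcompK] Liota Hiota _] [BGt Hext] _ _ zeta Sz Had [a Ea] [b Eb].
have BGh' : bounded_map ip ip Gh by split => //; exists Mh.
have key : forall a, exists eta, Gt eta = Gh a /\
    forall y, ipK (iota y) eta = ip y (Gh a).
  move=> a0.
  have [x cx] := approx_iter Hip Hcomp LG LGh MG0 Mh0 BG BGh SG SGh GhGh Gpos a0.
  have ck : cauchy_seq ipK (fun n => iota (x n)).
    move=> e e0; have [N HN] := conv_cauchy Hip cx e0; exists N => m n Nm Nn.
    have := HN m n Nm Nn; rewrite /ipnorm -(linmapB _ _ Liota) Hiota -GhGh SGh.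
    by rewrite (linmapB _ _ LGh).
  have [eta ceta] := HcompK _ ck.
  have cG : seq_conv ip (fun n => G (x n)) (Gh a0).
    apply: (conv_ext (u := fun n => Gh (Gh (x n)))) => [n|]; first by rewrite GhGh.
    exact: conv_map BGh' cx.
  exists eta; split.
    apply: (conv_unique Hip (u := fun n => Gt (iota (x n)))).
      exact: conv_map BGt ceta.
    by apply: (conv_ext (u := fun n => G (x n))) => // n; rewrite Hext.
  move=> y; apply: (conv_ip HipK Hip ceta cG) => n.
  by rewrite Hiota SG.
have [eta [E1 E2]] := key a; have [w [F1 F2]] := key b.
exists eta, w; split; last split; last split.
- by move=> x Dx; rewrite E2 F2 Ea Eb; apply: Had.
- by rewrite E1.
- by rewrite E1 F1 Ea Eb.
- by rewrite F1.
Qed.
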